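(* Fix $\theta$ in the interior of $\Theta$ and suppose $\theta'\mapsto\lambda(\theta')$ is differentiable at $\theta$, so that $\nabla_\theta V(\theta;z)$ exists for every $z\in\mathbb{R}^{SA}$. Let $F:\mathbb{R}^{SA}\to\mathbb{R}\cup\{-\infty\}$ be a proper, upper semicontinuous, concave function that is finite and continuously differentiable on an open neighborhood of $\lambda(\theta)$. Then $\theta\mapsto R(\pi_\theta)$ is differentiable at $\theta$ and $$\nabla_\theta R(\pi_\theta)=\lim_{\delta\to0_+}\ \operatorname*{argmax}_{x\in\mathbb{R}^d}\ \inf_{z\in\mathbb{R}^{SA}}\Big\{V(\theta;z)+\delta\,\nabla_\theta V(\theta;z)^\top x-F^*(z)-\tfrac{\delta}{2}\|x\|^2\Big\}.$$
   Context: Finite MDP: finite state space $\mathcal S$ with $S=|\mathcal S|$, finite action space $\mathcal A$ with $A=|\mathcal A|$, transition probabilities $P_a(i,j)$ of moving from state $i$ to state $j$ under action $a$, initial state distribution $\xi$ on $\mathcal S$, discount factor $\gamma\in(0,1)$. A (stationary) policy $\pi$ assigns to each state $s$ a distribution $\pi(\cdot|s)$ on $\mathcal A$. The state-action occupancy measure of $\pi$ is $\lambda^\pi\in\mathbb{R}^{SA}$, $\lambda^\pi_{sa}=\sum_{t=0}^\infty\gamma^t\,\mathbb P(s_t=s,a_t=a\mid \pi, s_0\sim\xi)$, where $a_t\sim\pi(\cdot|s_t)$ and $s_{t+1}\sim P_{a_t}(s_t,\cdot)$. Policies are parametrized as $\pi_\theta$, $\theta\in\Theta\subset\mathbb{R}^d$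 with $\Theta$ convex; write $\lambda(\theta):=\lambda^{\pi_\theta}$. For a concave utility $F$, the objective is $R(\pi_\theta):=F(\lambda(\theta))$. For $z\in\mathbb{R}^{SA}$ (viewed as a reward function), $V(\theta;z):=\langle z,\lambda(\theta)\rangle=\mathbb E^{\pi_\theta}[\sum_t\gamma^t z_{s_ta_t}]$ is the cumulative discounted value of $\pi_\theta$ under reward $z$. The (concave) Fenchel dual is $F^*(z):=\inf_\lambda\{\langle\lambda,z\rangle-F(\lambda)\}$. $\|\cdot\|$ is the Euclidean norm. *)

(* Defs.v *)
From HB Require Import structures.
From mathcomp Require Import all_boot all_order all_algebra.
From mathcomp Require Import all_classical all_reals all_analysis.
Set Implicit Arguments. Unset Strict Implicit. Unset Printing Implicit Defensive.
Import Order.TTheory GRing.Theory Num.Theory.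
Import numFieldNormedType.Exports.
Local Open Scope classical_set_scope.
Local Open Scope ring_scope.

Section MDP.
Variable R : realType.

(* States are 'I_nS, actions are 'I_nA; vectors in R^{SA} are nS x nA
   matrices 'M[R]_(nS, nA); parameters theta live in 'rV[R]_d. *)

Definition is_distr (n : nat) (p : 'rV[R]_n) :=
  (forall i, 0 <= p 0 i) /\ \sum_i p 0 i = 1.

(* P a is the transition matrix under action a: P a i j = P_a(i,j) *)
Definition is_stochastic (n : nat) (M : 'M[R]_n) :=
  forall i, is_distr (row i M).

(* a policy: pol s a = pi(a|s) *)
Definition is_policy (nS nA : nat) (pol : 'M[R]_(nS, nA)) :=
  forall s, is_distr (row s pol).

Definition pol_trans (nS nA : nat) (P : 'I_nA -> 'M[R]_nS)
    (pol : 'M[R]_(nS, nA)) : 'M[R]_nS :=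
  \matrix_(i, j) \sum_a pol i a * P a i j.

Definition state_law (nS nA : nat) (P : 'I_nA -> 'M[R]_nS) (xi : 'rV[R]_nS)
    (pol : 'M[R]_(nS, nA)) (t : nat) : 'rV[R]_nS :=
  iter t (fun mu => mu *m pol_trans P pol) xi.

(* state-action occupancy measure:
   lambda_{sa} = sum_t gamma^t P(s_t = s, a_t = a) *)
Definition occupancy (nS nA : nat) (P : 'I_nA -> 'M[R]_nS) (xi : 'rV[R]_nS)
    (gamma : R) (pol : 'M[R]_(nS, nA)) : 'M[R]_(nS, nA) :=
  \matrix_(s, a)
    limn (series (fun t => gamma ^+ t * (state_law P xi pol t 0 s * pol s a))).

Definition inner (nS nA : nat) (z l : 'M[R]_(nS, nA)) : R :=
  \sum_s \sum_a z s a * l s a.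

Definition sqnorm (d : nat) (x : 'rV[R]_d) : R := \sum_i x 0 i ^+ 2.

Definition grad (d : nat) (f : 'rV[R]_d -> R) (x : 'rV[R]_d) : 'rV[R]_d :=
  \row_i ('D_(delta_mx 0 i) f x).

Definition convex_set_rV (d : nat) (T : set 'rV[R]_d) :=
  forall x y (t : R), T x -> T y -> 0 <= t <= 1 -> T (t *: x + (1 - t) *: y).

(* concavity of an extended-real valued function: convex hypograph *)
Definition concave_ext (nS nA : nat) (F : 'M[R]_(nS, nA) -> \bar R) :=
  forall x y (r s t : R), (r%:E <= F x)%E -> (s%:E <= F y)%E -> 0 <= t <= 1 ->
    (((t * r + (1 - t) * s)%R)%:E <= F (t *: x + (1 - t) *: y)%R)%E.

Definition proper_concave (nS nA : nat) (F : 'M[R]_(nS, nA) -> \bar R) :=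
  (forall x, F x != +oo%E) /\ (exists x, F x != -oo%E).

Definition usc (nS nA : nat) (F : 'M[R]_(nS, nA) -> \bar R) :=
  forall x (a : R), (F x < a%:E)%E -> \forall y \near x, (F y < a%:E)%E.

Definition finite_C1_on (nS nA : nat) (F : 'M[R]_(nS, nA) -> \bar R)
    (U : set 'M[R]_(nS, nA)) :=
  (forall y, U y -> F y \is a fin_num) /\
  (forall y, U y -> differentiable (fine \o F) y) /\
  (forall i j, {within U, continuous (fun y => 'D_(delta_mx i j) (fine \o F) y)}).

Definition fenchel_dual (nS nA : nat) (F : 'M[R]_(nS, nA) -> \bar R)
    (z : 'M[R]_(nS, nA)) : \bar R :=
  ereal_inf [set ((inner l z)%:E - F l)%E | l in [set: 'M[R]_(nS, nA)]].

End MDP.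

(* Main.v *)
Require Import Defs.
From HB Require Import structures.
From mathcomp Require Import all_boot all_order all_algebra.
From mathcomp Require Import all_classical all_reals all_analysis.
From mathcomp Require Import ring lra.
Import Order.TTheory GRing.Theory Num.Theory.
Import numFieldNormedType.Exports.
Local Open Scope classical_set_scope.
Local Open Scope ring_scope.

Section Helpers.
Context {R : realType}.

Definition dot {d : nat} (b x : 'rV[R]_d) : R := (b *m x^T) 0 0.

Lemma dotE {d} (b x : 'rV[R]_d) : dot b x = \sum_j b 0 j * x 0 j.
Proof. by rewrite /dot mxE; apply: eq_bigr => j _; rewrite mxE. Qed.

Lemma sqnorm_ge0 {d} (x : 'rV[R]_d) : 0 <= sqnorm x.
Proof. by apply: sumr_ge0 => i _; exact: sqr_ge0. Qed.

Lemma dot_mid {d} (b x y : 'rV[R]_d) :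
  dot b (2^-1 *: (x + y)) = (dot b x + dot b y) / 2.
Proof.
rewrite !dotE -big_split /= mulr_suml; apply: eq_bigr => j _.
rewrite !mxE; ring.
Qed.

Lemma sq_mid {d} (x y : 'rV[R]_d) :
  sqnorm (2^-1 *: (x + y)) = (sqnorm x + sqnorm y) / 2 - sqnorm (x - y) / 4.
Proof.
rewrite /sqnorm -big_split /= !mulr_suml -sumrB; apply: eq_bigr => j _.
by rewrite !mxE; field.
Qed.

Lemma sq_sub {d} (b x : 'rV[R]_d) :
  sqnorm (x - b) = sqnorm x - 2 * dot b x + sqnorm b.
Proof.
rewrite dotE /sqnorm mulr_sumr -sumrB -big_split /=; apply: eq_bigr => j _.
rewrite !mxE; ring.
Qed.

Lemma dot_sq {d} (x : 'rV[R]_d) : dot x x = sqnorm x.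
Proof. by rewrite dotE; apply: eq_bigr => j _; rewrite expr2. Qed.

Lemma sqnorm_eq0 {d} (x : 'rV[R]_d) : sqnorm x <= 0 -> x = 0.
Proof.
move=> h; have h0 : sqnorm x = 0 by apply/eqP; rewrite eq_le h sqnorm_ge0.
move/eqP: h0; rewrite psumr_eq0 => [/allP H|j _]; last exact: sqr_ge0.
apply/matrixP => i j; rewrite ord1 mxE.
by have := H j (mem_index_enum _); rewrite sqrf_eq0 => /eqP.
Qed.

Lemma norm_lt_sq {d} (x : 'rV[R]_d) e : 0 < e -> sqnorm x < e ^+ 2 -> `|x| < e.
Proof.
move=> e0 h.
rewrite /Num.Def.normr /= mx_normrE.
apply/bigmax_lt => // -[i j] _ /=; rewrite ord1.
have h1 : x 0 j ^+ 2 < e ^+ 2.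
  apply: le_lt_trans h; rewrite /sqnorm (bigD1 j) //= lerDl.
  by apply: sumr_ge0 => k _; exact: sqr_ge0.
have hn : `|x 0 j| ^+ 2 = x 0 j ^+ 2 := real_normK (num_real _).
have := normr_ge0 (x 0 j); rewrite -hn in h1; nra.
Qed.

End Helpers.

Section Abs.
Variable R : realType.

Lemma le_ereal_real (e : \bar R) (c : R) :
  (forall r, (r%:E <= e)%E -> r <= c) -> (e <= c%:E)%E.
Proof.
case: e => [r| |] h.
- by rewrite lee_fin; apply: h.
- by exfalso; have := h (c + 1) (leey _); lra.
- exact: leNye.
Qed.

Lemma inv_lt_eventually (e : R) : 0 < e ->
  exists N, forall n, (N <= n)%N -> (n.+1%:R)^-1 < e.
Proof.
move=> e0; exists (Num.Def.trunc e^-1) => n hn.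
rewrite -(invrK e) ltf_pV2 ?posrE ?invr_gt0 //.
apply: lt_le_trans (truncnS_gt _) _.
by rewrite ler_nat ltnS.
Qed.

Variables (d : nat) (δ : R) (Z : Type) (S : set Z) (α : Z -> R)
  (b : Z -> 'rV[R]_d) (ob : 'rV[R]_d -> \bar R).
Let f z x := α z + δ * dot (b z) x - δ / 2 * sqnorm x.
Hypotheses (hδ : 0 < δ) (hS : exists z, S z)
  (hob : forall x r, (r%:E <= ob x)%E <-> (forall z, S z -> r <= f z x))
  (hx0 : exists x0 r0, (r0%:E <= ob x0)%E).

Let le_ob_f x z : S z -> (ob x <= (f z x)%:E)%E.
Proof. by move=> Sz; apply: le_ereal_real => r /hob; apply. Qed.

Let mid (x y : 'rV[R]_d) := 2^-1 *: (x + y).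

Let f_mid z x y : f z (mid x y) = (f z x + f z y) / 2 + δ / 8 * sqnorm (x - y).
Proof. rewrite /f /mid dot_mid sq_mid; by field. Qed.

Let ob_mid x y r s : (r%:E <= ob x)%E -> (s%:E <= ob y)%E ->
  (((r + s) / 2 + δ / 8 * sqnorm (x - y))%:E <= ob (mid x y))%E.
Proof.
move=> /hob hx /hob hy; apply/hob => z Sz; rewrite f_mid.
have := hx z Sz; have := hy z Sz; lra.
Qed.

Let M := ereal_sup (range ob).

Let ob_M x : (ob x <= M)%E.
Proof. by apply: ereal_sup_ubound; exists x. Qed.

Let M_fin : M \is a fin_num.
Proof.
have [z0 Sz0] := hS.
have [x0 [r0 h0]] := hx0.
have HB : (M <= (α z0 + δ / 2 * sqnorm (b z0))%:E)%E.
  apply/ereal_supP => _ [x _ <-]. apply: (@le_trans _ _ (f z0 x)%:E); first exact: le_ob_f.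
  rewrite lee_fin /f.
  have := sqnorm_ge0 (x - b z0); rewrite sq_sub => h.
  have := mulr_ge0 (ltW hδ) h; nra.
rewrite fin_numE; apply/andP; split.
  by apply/eqP => hM; have := le_trans h0 (ob_M x0); rewrite hM.
by apply/eqP => hM; move: HB; rewrite hM.
Qed.

Let m := fine M.
Let Mm : M = m%:E. Proof. by rewrite /m fineK. Qed.

Let max_ge x : (forall w, (ob w <= ob x)%E) -> (m%:E <= ob x)%E.
Proof. by move=> h; rewrite -Mm; apply/ereal_supP => _ [w _ <-]. Qed.

Lemma argmax_unique x y : (forall w, (ob w <= ob x)%E) ->
  (forall w, (ob w <= ob y)%E) -> x = y.
Proof.
move=> /max_ge hx /max_ge hy.
have := le_trans (ob_mid _ _ _ _ hx hy) (ob_M _); rewrite Mm lee_fin => h.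
have h2 : δ / 8 * sqnorm (x - y) <= 0 by lra.
move: h2; rewrite pmulr_rle0 ?divr_gt0 // => /sqnorm_eq0 /eqP.
by rewrite subr_eq0 => /eqP.
Qed.

Lemma argmax_exists : exists x, forall w, (ob w <= ob x)%E.
Proof.
pose a (n : nat) : R := (n.+1%:R)^-1.
have a_gt0 n : 0 < a n by rewrite invr_gt0 ltr0Sn.
have hn : forall n : nat, exists x, ((m - a n)%:E < ob x)%E.
  move=> n; have : ((m - a n)%:E < M)%E by rewrite Mm lte_fin; have := a_gt0 n; lra.
  by move/ereal_sup_gt => [_ [x _ <-] h]; exists x.
have [u hu] := choice hn.
have hu' n : ((m - a n)%:E <= ob (u n))%E := ltW (hu n).
have cau n k : δ * sqnorm (u n - u k) <= 4 * (a n + a k).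
  have := le_trans (ob_mid _ _ _ _ (hu' n) (hu' k)) (ob_M _); rewrite Mm lee_fin => h.
  have e8 : δ / 8 * sqnorm (u n - u k) = (δ * sqnorm (u n - u k)) / 8 by rewrite mulrAC.
  rewrite e8 in h; lra.
have an_le n k : (k <= n)%N -> a n <= a k.
  by move=> hkn; rewrite /a lef_pV2 ?posrE ?ltr0Sn // ler_nat ltnS.
have ucvg : cvg (u @ \oo).
  apply/cauchy_cvgP/cauchy_exP => e e0.
  have e80 : 0 < δ * e ^+ 2 / 8 by rewrite divr_gt0 // mulr_gt0 // exprn_gt0.
  have [N hN] := inv_lt_eventually _ e80.
  exists (u N); exists N => // n /= hNn.
  rewrite -ball_normE /ball_ /=; apply: norm_lt_sq => //.
  rewrite -(ltr_pM2l hδ).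
  have := cau N n; have := an_le _ _ hNn; have := hN N (leqnn N); rewrite /a.
  set P := δ * sqnorm _; set Q := δ * e ^+ 2; set A := N.+1%:R^-1; set B := n.+1%:R^-1. lra.
set xs := lim (u @ \oo).
have ux : u n @[n --> \oo] --> xs := ucvg.
exists xs => w; apply: le_trans (ob_M w) _; rewrite Mm.
apply/hob => z Sz.
rewrite leNgt; apply/negP => hlt.
pose ε := m - f z xs.
have ε0 : 0 < ε / 2 by rewrite divr_gt0 // /ε subr_gt0.
have uc j : (fun n => u n 0 j) @ \oo --> xs 0 j.
  exact: (continuous_cvg _ (@coord_continuous R 1 d 0 j xs) ux).
have fcont : (fun n => f z (u n)) @ \oo --> f z xs.
  rewrite /f; apply: cvgB; first apply: cvgD; first exact: cvg_cst.
  - apply: cvgMl_tmp; under eq_cvg do rewrite dotE; rewrite dotE.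
    apply: (cvg_big add_continuous) => j _.
    exact: cvgMl_tmp.
  - apply: cvgMl_tmp; rewrite /sqnorm.
    apply: (cvg_big add_continuous) => j _.
    exact: cvgM.
have [N1 hN1] := inv_lt_eventually _ ε0.
move/cvgrPdist_lt : fcont => /(_ (ε / 2) ε0) H.
have H2 : \forall n \near \oo, (N1 <= n)%N by exists N1.
have [n /= [h1 h2]] := filter_ex (filterI H H2).
have h3 := (hob (u n) (m - a n)).1 (hu' n) z Sz.
have h4 := hN1 n h2.
move: h1; rewrite ltr_norml => /andP[h1 h1'].
rewrite /ε in h1 h1' h4; rewrite /a in h3.
move: h1 h1' h3 h4; set c := f z xs; set c' := f z (u n); set A := n.+1%:R^-1; lra.
Qed.

End Abs.

Section M1.
Context {R : realType} {nS nA : nat}.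

Lemma inner_lin (z : 'M[R]_(nS, nA)) : linear (inner z).
Proof.
move=> k u v; rewrite /inner /= -[k *: (\sum_s _)]/(k * _) mulr_sumr -big_split; apply: eq_bigr => s _.
rewrite mulr_sumr -big_split; apply: eq_bigr => a _; by rewrite !mxE mulrDr mulrCA.
Qed.

Lemma inner_sym (l z : 'M[R]_(nS, nA)) : inner l z = inner z l.
Proof. by apply: eq_bigr => s _; apply: eq_bigr => a _; rewrite mulrC. Qed.

Lemma inner_cont (z : 'M[R]_(nS, nA)) : continuous (inner z).
Proof.
rewrite /inner; apply: (continuous_big add_continuous) => s _.
apply: (continuous_big add_continuous) => a _ l.
exact: (cvgMl_tmp (@coord_continuous R nS nA s a l)).
Qed.

Definition innerL (z : 'M[R]_(nS, nA)) : {linear 'M[R]_(nS, nA) -> R} :=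
  HB.pack (inner z) (GRing.isLinear.Build _ _ _ _ (inner z) (inner_lin z)).

Lemma innerLE z l : innerL z l = inner z l. Proof. by []. Qed.

Lemma dnbhs_right (P : R -> Prop) :
  (\forall h \near 0^', P h) -> \forall h \near 0^'+, P h.
Proof.
move=> [e e0 he]; exists e => // h hh h0; apply: he => //.
by rewrite gt_eqF.
Qed.

Lemma near_line (U : set 'M[R]_(nS, nA)) (L w : 'M[R]_(nS, nA)) :
  open U -> U L -> \forall h \near (0 : R)^'+, U (h *: w + L).
Proof.
move=> Uo UL.
have c : (fun h : R => h *: w + L) @ (0 : R) --> L.
  have := @cvgD _ _ _ (nbhs (0 : R)) _ (fun h : R => h *: w) (fun _ => L) (0 *: w) L
    (@cvgZr_tmp _ _ _ (nbhs (0:R)) _ id 0 w cvg_id) (cvg_cst L).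
  rewrite scale0r add0r; apply.
exact: (cvg_at_right_filter c) _ (Uo L UL).
Qed.

End M1.

Theorem theorem1 (R : realType) (nS nA d : nat)
  (P : 'I_nA -> 'M[R]_nS) (xi : 'rV[R]_nS) (gamma : R)
  (pi : 'rV[R]_d -> 'M[R]_(nS, nA)) (Theta : set 'rV[R]_d)
  (F : 'M[R]_(nS, nA) -> \bar R) (theta : 'rV[R]_d) :
  (forall a, is_stochastic (P a)) ->
  is_distr xi ->
  0 < gamma < 1 ->
  convex_set_rV Theta ->
  (forall th, Theta th -> is_policy (pi th)) ->
  let lam := fun th => occupancy P xi gamma (pi th) in
  let V := fun th z => inner z (lam th) in
  interior Theta theta ->
  differentiable lam theta ->
  proper_concave F -> usc F -> concave_ext F ->
  (exists U : set 'M[R]_(nS, nA),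
      open U /\ U (lam theta) /\ finite_C1_on F U) ->
  let Rpi := fun th => fine (F (lam th)) in
  let obj := fun (delta : R) (x : 'rV[R]_d) =>
    ereal_inf [set ((V theta z + delta * (grad (V ^~ z) theta *m x^T) 0 0
                     - delta / 2 * sqnorm x)%:E - fenchel_dual F z)%E
              | z in [set: 'M[R]_(nS, nA)]] in
  differentiable Rpi theta /\
  exists xsel : R -> 'rV[R]_d,
    (forall delta, 0 < delta -> forall x,
        (forall y, (obj delta y <= obj delta x)%E) <-> x = xsel delta) /\
    xsel delta @[delta --> 0^'+] --> grad Rpi theta.
Proof.
move=> _ _ _ _ _ lam V _ dlam [Fnp _] _ Fconc [U [Uo [UL [Ufin [Udiff _]]]]] Rpi obj.
set L := lam theta.
pose G := fine \o F.
have dG : differentiable G L := Udiff L UL.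
have FLfin : F L \is a fin_num := Ufin L UL.
pose fL := fine (F L).
have FLE : F L = fL%:E by rewrite /fL fineK.
pose J := 'd lam theta.
pose z0 : 'M[R]_(nS, nA) := \matrix_(s, a) 'd G L (delta_mx s a).
have K0 w : 'd G L w = inner z0 w.
  rewrite {1}(matrix_sum_delta w) linear_sum; apply: eq_bigr => s _.
  rewrite linear_sum; apply: eq_bigr => a _; rewrite linearZ mxE mulrC.
  by [].
have K1 z v : 'D_v (V ^~ z) theta = inner z (J v).
  have -> : V ^~ z = innerL z \o lam by [].
  have dI : differentiable (innerL z) (lam theta).
    by apply: linear_differentiable; exact: inner_cont.
  rewrite deriveE; last exact: differentiable_comp.
  by rewrite diff_comp // diff_lin //; exact: (inner_cont z).
have dRpi : differentiable Rpi theta := differentiable_comp dlam dG.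
have KR v : 'D_v Rpi theta = inner z0 (J v).
  by rewrite deriveE // (_ : Rpi = G \o lam) // diff_comp //; exact: K0.
have K2 z x : (grad (V ^~ z) theta *m x^T) 0 0 = inner z (J x).
  rewrite -[(_ *m _) 0 0]/(dot _ x) dotE.
  rewrite {2}(row_sum_delta x) !linear_sum /=.
  rewrite -[inner z _]/(innerL z _) linear_sum; apply: eq_bigr => i _.
  by rewrite !mxE K1 !linearZ /= mulrC.
split => //.
pose g := grad Rpi theta.
have hg : grad (V ^~ z0) theta = g by apply/rowP => i; rewrite !mxE K1 KR.
pose Fs := fenchel_dual F.
have F1 z l : (Fs z <= (inner l z)%:E - F l)%E.
  by apply: ereal_inf_lbound; exists l.
have innerB z l l' : inner z (l - l') = inner z l - inner z l'.
  by rewrite -!innerLE linearB.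
have innerSL z k v l : inner z (k *: v + l) = k * inner z v + inner z l.
  by rewrite -!innerLE linearP.
have SG l : (F l <= (fL + inner z0 (l - L))%:E)%E.
  case hl: (F l) => [r| |]; last exact: leNye; last by move: (Fnp l); rewrite hl.
  rewrite lee_fin.
  pose v := l - L.
  have hc : (fun h => h^-1 *: (G (h *: v + L) - G L)) @ 0^' --> 'D_v G L.
    exact: (@diff_derivable _ _ _ G L v dG).
  rewrite -K0 -deriveE //.
  rewrite leNgt; apply/negP => hlt.
  pose eps := (r - fL - 'D_v G L) / 2.
  have eps0 : 0 < eps by rewrite /eps divr_gt0 //; lra.
  move/cvgrPdist_lt: hc => /(_ _ eps0) /dnbhs_right hq.
  have hU := @near_line R nS nA U L v Uo UL.
  have : \forall h \near (0 : R)^'+, False.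
    near=> h.
    have hd : 0 < h by near: h; exact: nbhs_right_gt.
    have h1 : h < 1 by near: h; exact: nbhs_right_lt.
    have hUh : U (h *: v + L) by near: h; exact: hU.
    have hqh : `|'D_v G L - h^-1 *: (G (h *: v + L) - G L)| < eps.
      by near: h; exact: hq.
    have hcv := Fconc l L r fL h.
    rewrite hl FLE !lee_fin !lexx in hcv.
    have hh : 0 <= h <= 1 by rewrite !ltW.
    have {hcv} := hcv isT isT hh.
    have -> : h *: l + (1 - h) *: L = h *: v + L.
      by rewrite /v scalerBl scale1r scalerBr addrA addrAC.
    rewrite -(fineK (Ufin _ hUh)) lee_fin -/(G _) => hcv.
    move: hqh; rewrite -[h^-1 *: _]/(h^-1 * _).
    have : r - fL <= h^-1 * (G (h *: v + L) - G L).
      rewrite ler_pdivlMl // -/fL; rewrite /G /= -/fL; move: hcv; rewrite -/(G _); lra.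
    move=> hge /ltr_normlP [hq1 _]; rewrite /eps in hq1; move: hge hq1 hlt.
    rewrite -/v; set D := 'D_v G L; set X := h^-1 * _; clear; lra.
  move=> H; have [h //] := filter_ex H.
have Fs_notpinf z : Fs z != +oo%E.
  apply/negP => /eqP h; have := F1 z L; rewrite h FLE.
  by rewrite -EFinB leye_eq.
have F4 : ((inner L z0 - fL)%:E <= Fs z0)%E.
  apply/ereal_infP => _ [l _ <-].
  have := SG l; case hl: (F l) => [r| |] //.
  - rewrite lee_fin => h; rewrite -EFinB lee_fin.
    move: h; rewrite innerB !(inner_sym _ z0); lra.
  - by move=> _; rewrite /= leey.
have Sz0 : Fs z0 \is a fin_num.
  rewrite fin_numE Fs_notpinf andbT; apply/eqP => h; move: F4; rewrite h.
  by [].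
pose fs0 := fine (Fs z0).
have fs0ge : inner L z0 - fL <= fs0 by rewrite -lee_fin /fs0 fineK.
have char delta x r : (r%:E <= obj delta x)%E <-> (forall z, Fs z \is a fin_num ->
   r <= (inner z L - fine (Fs z)) + delta * dot (grad (V ^~ z) theta) x
        - delta / 2 * sqnorm x).
  split.
  - move=> h z hz; have := le_trans h (ereal_inf_lbound (ex_intro2 _ _ z I erefl)).
    rewrite -/(Fs z) -(fineK hz) -EFinB lee_fin /dot /V; lra.
  - move=> h; apply/ereal_infP => _ [z _ <-]; rewrite -/(Fs z).
    have [hz|hz] := boolP (Fs z \is a fin_num).
      rewrite -(fineK hz) -EFinB lee_fin; have := h z hz; rewrite /dot /V; lra.
    have -> : Fs z = -oo%E.
      by move: hz; rewrite fin_numE Fs_notpinf andbT negbK => /eqP.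
    by rewrite /= leey.
have LB delta x : F (delta *: J x + L) \is a fin_num ->
    (((fine (F (delta *: J x + L))) - delta / 2 * sqnorm x)%:E <= obj delta x)%E.
  move=> hfin; apply/char => z hz.
  have := F1 z (delta *: J x + L); rewrite -(fineK hz) -(fineK hfin) -EFinB lee_fin.
  rewrite inner_sym innerSL /dot K2; lra.
have hob delta : 0 < delta -> forall x r, (r%:E <= obj delta x)%E <->
    (forall z, Fs z \is a fin_num ->
      r <= (fun z x => (fun z => inner z L - fine (Fs z)) z
             + delta * dot ((fun z => grad (V ^~ z) theta) z) x
             - delta / 2 * sqnorm x) z x).
  by move=> _ x r; exact: char.
have hS : exists z, Fs z \is a fin_num by exists z0.
have hx0 delta : exists x0 r0, (r0%:E <= obj delta x0)%E.
  exists 0, (fine (F (delta *: J 0 + L)) - delta / 2 * sqnorm (0 : 'rV[R]_d)).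
  apply: LB; rewrite linear0 scaler0 add0r; exact: FLfin.
have hex delta : 0 < delta -> exists x, forall y, (obj delta y <= obj delta x)%E.
  move=> hd; exact: (@argmax_exists R d delta _ _ (fun z => inner z L - fine (Fs z))
    (fun z => grad (V ^~ z) theta) (obj delta) hd hS (hob delta hd) (hx0 delta)).
pose xsel delta := xget 0 [set x | forall y, (obj delta y <= obj delta x)%E].
have hxsel delta : 0 < delta -> forall y, (obj delta y <= obj delta (xsel delta))%E.
  move=> hd; exact: (xgetPex 0 (hex delta hd)).
exists xsel; split.
  move=> delta hd x; split => [hx|->]; last exact: hxsel.
  exact: (@argmax_unique R d delta _ _ (fun z => inner z L - fine (Fs z))
    (fun z => grad (V ^~ z) theta) (obj delta) hd hS (hob delta hd) (hx0 delta) _ _ hx (hxsel delta hd)).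
have upper delta x : 0 < delta ->
    (obj delta x <= (fL + delta * dot g x - delta / 2 * sqnorm x)%:E)%E.
  move=> hd; apply: le_ereal_real => r /char /(_ z0 Sz0).
  rewrite hg -/fs0; move: fs0ge; rewrite inner_sym; lra.
pose w := J g.
have Dw : 'D_w G L = sqnorm g.
  by rewrite deriveE // K0 -K2 hg -[(_ *m _) 0 0]/(dot g g) dot_sq.
have hc : (fun h => h^-1 *: (G (h *: w + L) - G L)) @ 0^' --> 'D_w G L.
  exact: (@diff_derivable _ _ _ G L w dG).
apply/cvgrPdist_lt => e e0.
have e2 : 0 < e ^+ 2 / 2 by rewrite divr_gt0 // exprn_gt0.
move/cvgrPdist_lt: hc => /(_ _ e2) /dnbhs_right hq.
have hU := @near_line R nS nA U L w Uo UL.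
near=> delta.
have hd : 0 < delta by near: delta; exact: nbhs_right_gt.
have hUd : U (delta *: w + L) by near: delta; exact: hU.
have hqd : `|'D_w G L - delta^-1 *: (G (delta *: w + L) - G L)| < e ^+ 2 / 2.
  by near: delta; exact: hq.
have hx := hxsel delta hd g.
have lo := LB delta g (Ufin _ hUd).
have up := upper delta (xsel delta) hd.
have := le_trans lo (le_trans hx up); rewrite lee_fin => ineq.
rewrite distrC; apply: norm_lt_sq => //.
rewrite sq_sub.
move: hqd ineq; rewrite Dw.
set Gd := fine (F (delta *: J g + L)).
have -> : G (delta *: w + L) = Gd by [].
have -> : G L = fL by [].
set q := delta^-1 *: (Gd - fL).
have qE : Gd - fL = delta * q.
  by rewrite /q -[delta^-1 *: _]/(delta^-1 * _) mulrA mulfV ?gt_eqF // mul1r.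
move=> /ltr_normlP [_ hq1] ineq.
have h2 : delta * (sqnorm g - q) < delta * (e ^+ 2 / 2) by rewrite ltr_pM2l // ; lra.
rewrite -(ltr_pM2l hd).
set sx := sqnorm (xsel delta); set sg := sqnorm g; set dx := dot g (xsel delta).
move: h2 ineq qE; rewrite -/sg -/dx -/sx.
nra.
Unshelve. all: by end_near.
Qed.
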